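(* If a graph $G$ contains a path on $k$ vertices as a subgraph for every $k\in\mathbb{N}$, then $G$ is $\omega$-evadible.
   Context: Cat Herding is played on a simple, possibly infinite graph $G$. The cat first places its token on a vertex. Then the players alternate, the herder moving first: the herder deletes one edge of the current graph, and then, unless the cat's current vertex has degree $0$ in the current graph, the cat moves its token along a finite path with at least one edge in the current graph to a different vertex. The cat is captured when its vertex has degree $0$ in the current graph. $G$ is $k$-evadible if the cat has a strategy (including its choice of starting vertex) that, against every herder strategy, yields a legal cat move after each of the first $k-1$ edge deletions; $G$ is $\omega$-evadible if it is $k$-evadible for every $k\in\mathbb{N}$. *)

(* Defs.v *)
From Stdlib Require Import List Relations.
Import ListNotations.

Definition simple_graph {V : Type} (adj : V -> V -> Prop) : Prop :=
  (forall x y, adj x y -> adj y x) /\ (forall x, ~ adj x x).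

Definition deleted {V : Type} (D : list (V * V)) (x y : V) : Prop :=
  In (x, y) D \/ In (y, x) D.

Definition cur_adj {V : Type} (adj : V -> V -> Prop) (D : list (V * V))
  (x y : V) : Prop := adj x y /\ ~ deleted D x y.

Definition cat_move {V : Type} (adj : V -> V -> Prop) (D : list (V * V))
  (v w : V) : Prop := w <> v /\ clos_trans V (cur_adj adj D) v w.

(* survives adj n D v : with deleted edges D and the cat at v (cat to be
   moved after the herder's next deletion), the cat can guarantee a legal
   move after each of the next n edge deletions, whatever the herder does. *)
Fixpoint survives {V : Type} (adj : V -> V -> Prop) (n : nat)
  (D : list (V * V)) (v : V) : Prop :=
  match n with
  | 0 => True
  | S m => forall x y, cur_adj adj D x y ->
      exists w, cat_move adj ((x, y) :: D) v w /\ survives adj m ((x, y) :: D) w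
  end.

(* G is k-evadible: some starting vertex lets the cat make a legal move
   after each of the first k-1 deletions, against every herder play. *)
Definition k_evadible {V : Type} (adj : V -> V -> Prop) (k : nat) : Prop :=
  exists v : V, survives adj (k - 1) [] v.

Definition omega_evadible {V : Type} (adj : V -> V -> Prop) : Prop :=
  forall k : nat, k_evadible adj k.

Definition has_path_subgraph {V : Type} (adj : V -> V -> Prop) (k : nat) : Prop :=
  exists f : nat -> V,
    (forall i j, i < k -> j < k -> f i = f j -> i = j) /\
    (forall i, S i < k -> adj (f i) (f (S i))).

(* Main.v *)
Require Import Defs.
From Stdlib Require Import List Relations.
From Stdlib Require Import Lia Classical PeanoNat.
Import ListNotations.

Lemma pow2_pos (m : nat) : 1 <= Nat.pow 2 m.
Proof. induction m; simpl; lia. Qed.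

Lemma ct_sym {V : Type} (R : V -> V -> Prop) :
  (forall a b, R a b -> R b a) -> forall a b, clos_trans V R a b -> clos_trans V R b a.
Proof.
  intros HR a b H. induction H.
  - apply t_step. auto.
  - eapply t_trans; eauto.
Qed.

Section Strat.
Variable V : Type.
Variable adj : V -> V -> Prop.
Hypothesis Hsym : forall x y, adj x y -> adj y x.
Variable f : nat -> V.
Variable N : nat.
Hypothesis Hinj : forall i j, i < N -> j < N -> f i = f j -> i = j.
Hypothesis Hpath : forall i, S i < N -> adj (f i) (f (S i)).

Lemma cur_sym D a b : cur_adj adj D a b -> cur_adj adj D b a.
Proof.
  unfold cur_adj, deleted. intros [H1 H2]. split; [auto|]. tauto.
Qed.

Lemma pair_eq x y i j : S i < N -> S j < N ->
  ((x, y) = (f i, f (S i)) \/ (x, y) = (f (S i), f i)) ->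
  ((x, y) = (f j, f (S j)) \/ (x, y) = (f (S j), f j)) -> i = j.
Proof.
  intros Hi Hj [H1|H1] [H2|H2]; injection H1 as A B; injection H2 as C E.
  - apply Hinj; [lia|lia|congruence].
  - assert (i = S j) by (apply Hinj; [lia|lia|congruence]).
    assert (S i = j) by (apply Hinj; [lia|lia|congruence]). lia.
  - assert (S i = j) by (apply Hinj; [lia|lia|congruence]).
    assert (i = S j) by (apply Hinj; [lia|lia|congruence]). lia.
  - assert (S i = S j) by (apply Hinj; [lia|lia|congruence]). lia.
Qed.

Lemma path_reach D a d : a + S d < N ->
  (forall i, a <= i < a + S d -> ~ deleted D (f i) (f (S i))) ->
  clos_trans V (cur_adj adj D) (f a) (f (a + S d)).
Proof.
  induction d; intros Hb Hw.
  - apply t_step. replace (a + 1) with (S a) by lia. split.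
    + apply Hpath. lia.
    + apply Hw. lia.
  - eapply t_trans. apply IHd. lia. intros i Hi; apply Hw; lia.
    apply t_step. replace (a + S (S d)) with (S (a + S d)) by lia. split.
    + apply Hpath. lia.
    + apply Hw. lia.
Qed.

Lemma strat n : forall c D, c + 2 * Nat.pow 2 n < N ->
  (forall i, c <= i < c + 2 * Nat.pow 2 n -> ~ deleted D (f i) (f (S i))) ->
  survives adj n D (f (c + Nat.pow 2 n)).
Proof.
  induction n as [|m IH]; intros c D Hc Hw.
  - exact I.
  - cbn [survives]. intros x y Hxy.
    rewrite Nat.pow_succ_r' in *.
    pose proof (pow2_pos m) as HL.
    set (L := Nat.pow 2 m) in *.
    assert (Hsplit : (forall i, c <= i < c + 2 * L -> ~ deleted ((x, y) :: D) (f i) (f (S i)))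
      \/ (forall i, c + 2 * L <= i < c + 4 * L -> ~ deleted ((x, y) :: D) (f i) (f (S i)))).
    { destruct (classic (forall i, c <= i < c + 2 * L -> ~ deleted ((x, y) :: D) (f i) (f (S i)))) as [H|H].
      - left; exact H.
      - right. intros j Hj Hd. apply H. intros i Hi Hd'.
        unfold deleted in Hd, Hd'. simpl in Hd, Hd'.
        assert (Hi' : ~ deleted D (f i) (f (S i))) by (apply Hw; lia).
        assert (Hj' : ~ deleted D (f j) (f (S j))) by (apply Hw; lia).
        unfold deleted in Hi', Hj'.
        assert (E : i = j).
        { apply (pair_eq x y). lia. lia. tauto. tauto. }
        lia. }
    destruct Hsplit as [Hl|Hr].
    + exists (f (c + L)). split.
      * split.
        -- intro E. apply Hinj in E; lia.
        -- apply ct_sym. apply cur_sym.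
           destruct L as [|l]; [lia|].
           replace (c + 2 * S l) with ((c + S l) + S l) by lia.
           apply path_reach. lia. intros i Hi; apply Hl; lia.
      * apply IH. lia. intros i Hi; apply Hl; lia.
    + exists (f (c + 2 * L + L)). split.
      * split.
        -- intro E. apply Hinj in E; lia.
        -- destruct L as [|l]; [lia|].
           apply path_reach. lia. intros i Hi; apply Hr; lia.
      * apply IH. lia. intros i Hi; apply Hr; lia.
Qed.
End Strat.

Theorem mainTheorem16 (V : Type) (adj : V -> V -> Prop) :
  simple_graph adj ->
  (forall k : nat, has_path_subgraph adj k) ->
  omega_evadible adj.
Proof.
  intros [Hsym _] Hp k. unfold k_evadible.
  set (n := k - 1).
  destruct (Hp (S (2 * Nat.pow 2 n))) as [f [Hinj Hpath]].
  exists (f (0 + Nat.pow 2 n)).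
  apply (strat V adj Hsym f (S (2 * Nat.pow 2 n))); auto.
  intros i Hi. unfold deleted. simpl. tauto.
Qed.
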